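(* Let $n\geq3$ and let $V$ be a finite dimensional positively graded vector space such that $V^k=0$ for $k<\frac13 n$ or $k>\frac23 n-1$. Then every graph $\Gamma\in\mathbf{HGC}_{V,n}$ with at least one vertex has cohomological degree $|\Gamma|\leq0$.
   Context: Put $V_1=\mathbb{Q}1\oplus V$ with $|1|=0$. The graphs spanning $\mathbf{HGC}_{V,n}$ are connected graphs with internal vertices (here called vertices) and hairs (edges with one free end), in which each vertex carries a (possibly empty) monomial of decorations from $V^*$ (an element $\alpha\in(V^k)^*$ having degree $-k$), each hair carries one decoration from $V_1$, and each vertex is at least trivalent where every $V^*$-decoration at it counts $+1$ to its valence (i.e. if $v$ is the number of vertices, $e$ the number of edges including hairs, $h$ the number of hairs and $u$ the number of $V^*$-decorations, then $3v+h\le 2e+u$). The cohomological degree of such a graph is $|\Gamma|=nv-(n-1)e+d+D$, where $d$ is the total degree of the $V^*$-decorations and $D$ the total degree of the hair decorations in $V_1$. (The edgeless elements and the single edge with two hair ends have no vertex.) *)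

(* Defs.v *)
From mathcomp Require Import all_boot all_order all_algebra.
Set Implicit Arguments. Unset Strict Implicit. Unset Printing Implicit Defensive.

(* A finite dimensional graded vector space V is represented by its
   dimension function: dimV k = dim V^k (k : nat; negative degrees are
   absent, which is harmless since V is required to be positively graded).
   A homogeneous basis element of V (resp. of the dual V^* ) of degree k is
   a pair (k, i) with i : 'I_(dimV k). *)
Definition basis_elt (dimV : nat -> nat) := {k : nat & 'I_(dimV k)}.
Definition bdeg (dimV : nat -> nat) (b : basis_elt dimV) : nat := projT1 b.

(* A basis graph spanning HGC_{V,n} that has at least one vertex:
   - vertices are 'I_nv, nv >= 1;
   - internal edges: a list of (unordered, stored as ordered) pairs of vertices
     (multiple edges / loops allowed);
   - hairs: a list of (attachment vertex, decoration in V_1 = Q1 (+) V),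
     decoration None = 1 (degree 0), Some b = basis element b of V;
   - each vertex carries a (possibly empty) monomial of basis elements of V^*
     (an element of (V^k)^* has degree -k). *)
Record hgraph (dimV : nat -> nat) := HGraph {
  nv : nat;
  gedges : seq ('I_nv * 'I_nv);
  ghairs : seq ('I_nv * option (basis_elt dimV));
  gdecos : 'I_nv -> seq (basis_elt dimV)
}.
Arguments nv {dimV} h.
Arguments gedges {dimV} h.
Arguments ghairs {dimV} h.
Arguments gdecos {dimV} h _.

Section Graphs.
Variables (dimV : nat -> nat) (G : hgraph dimV).

Definition adj : rel 'I_(nv G) :=
  fun x y => ((x, y) \in gedges G) || ((y, x) \in gedges G).

Definition gconnected : Prop := forall x y : 'I_(nv G), connect adj x y.

Definition valence (x : 'I_(nv G)) : nat :=
  count (fun e => e.1 == x) (gedges G) + count (fun e => e.2 == x) (gedges G)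
  + count (fun h => h.1 == x) (ghairs G) + size (gdecos G x).

Definition at_least_trivalent : Prop := forall x, 3 <= valence x.

Definition nedges : nat := size (gedges G) + size (ghairs G).

Definition deco_deg : int :=
  - (\sum_(x < nv G) \sum_(b <- gdecos G x) (bdeg b)%:Z)%R.

Definition hair_deg : int :=
  (\sum_(h <- ghairs G) (match h.2 with None => 0%N | Some b => bdeg b end)%:Z)%R.

Definition gdegree (n : nat) : int :=
  (n%:Z * (nv G)%:Z - (n%:Z - 1) * (nedges)%:Z + deco_deg + hair_deg)%R.

End Graphs.

(* Main.v *)
Require Import Defs.
From mathcomp Require Import all_boot all_order all_algebra zify.
Import Order.TTheory GRing.Theory Num.Theory.

Lemma sum_count (m : nat) (T : Type) (f : T -> 'I_m) (s : seq T) :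
  \sum_(x < m) count (fun e => f e == x) s = size s.
Proof.
elim: s => [|a s IH] /=; first by rewrite big1.
rewrite big_split /= IH (bigD1 (f a)) //= eqxx big1 ?addn0 // => y /negbTE.
by rewrite eq_sym => ->.
Qed.

Lemma Posz_sum (I : Type) (r : seq I) (F : I -> nat) :
  Posz (\sum_(i <- r) F i)%N = (\sum_(i <- r) Posz (F i))%R.
Proof.
elim: r => [|a r IH]; first by rewrite !big_nil.
by rewrite !big_cons PoszD IH.
Qed.

Theorem lemma13p2 (n : nat) (dimV : nat -> nat)
  (hn : (3 <= n)%N)
  (hfin : exists N : nat, forall k, (N <= k)%N -> dimV k = 0%N)
  (hpos : dimV 0 = 0%N)
  (hconc : forall k : nat, dimV k <> 0%N -> (n <= 3 * k)%N /\ (3 * k <= 2 * n - 3)%N)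
  (G : hgraph dimV)
  (hv : (1 <= nv G)%N)
  (hconn : gconnected G)
  (htri : at_least_trivalent G) :
  (gdegree G n <= 0)%R.
Proof.
have hb : forall b : basis_elt dimV, (n <= 3 * bdeg b)%N /\ (3 * bdeg b <= 2 * n - 3)%N.
  move=> [k i]; apply: hconc => /= h0; case: i; rewrite h0.
  by [].
set E := size (gedges G); set h := size (ghairs G).
set u := (\sum_(x < nv G) size (gdecos G x))%N.
set Sd := (\sum_(x < nv G) \sum_(b <- gdecos G x) bdeg b)%N.
set Sh := (\sum_(hh <- ghairs G) (match hh.2 with None => 0%N | Some b => bdeg b end))%N.
have h1 : (3 * nv G <= 2 * E + h + u)%N.
  have : (\sum_(x < nv G) 3 <= \sum_(x < nv G) valence x)%N by apply: leq_sum => x _; apply: htri.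
  rewrite sum_nat_const card_ord /valence !big_split /= !sum_count.
  by rewrite /E /h /u mulnC mul2n -addnn.
have h2 : (n * u <= 3 * Sd)%N.
  rewrite /u /Sd big_distrr big_distrr /=; apply: leq_sum => x _.
  elim: (gdecos G x) => [|b s IH]; first by rewrite big_nil !muln0.
  rewrite big_cons /= mulnDr; have [hb1 _] := hb b; lia.
have h3 : (3 * Sh <= (2 * n - 3) * h)%N.
  rewrite /Sh /h; elim: (ghairs G) => [|[x [b|]] s IH]; rewrite ?big_nil ?big_cons //=.
    have [_ hb2] := hb b; lia.
  lia.
have key : (n * nv G + Sh <= (n - 1) * (E + h) + Sd)%N.
  have h1' : (n * (3 * nv G) <= n * (2 * E + h + u))%N by rewrite leq_mul2l h1 orbT.
  nia.
rewrite /gdegree /deco_deg /hair_deg /nedges -/E -/h.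
have -> : (\sum_(x < nv G) \sum_(b <- gdecos G x) (bdeg b)%:Z%R)%R = Sd%:Z%R.
  rewrite /Sd Posz_sum; apply: eq_bigr => x _.
  by rewrite Posz_sum.
have -> : (\sum_(hh <- ghairs G) (match hh.2 with None => 0%N | Some b => bdeg b end)%:Z%R)%R = Sh%:Z%R.
  by rewrite /Sh Posz_sum.
lia.
Qed.
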